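(* Let $C=\{\beta=(\beta_1,\beta_2)\in[0,1]^2:\beta_1\le\beta_2\}$ and let $A\subseteq C$ satisfy: (i) $A$ is closed; (ii) $\{(b,b): b\in[0,1]\}\subseteq A$; (iii) for all $\beta\in A$ and all $\gamma\in C$, if $\beta_1\le\gamma_1\le\gamma_2\le\beta_2$ then $\gamma\in A$. Then there exists a function $\Delta:[0,1]\to[0,1]$ such that for all $\beta\in C$: $\beta\in A$ if and only if $\beta_2-\beta_1\le\Delta\big(\tfrac{\beta_1+\beta_2}{2}\big)$. *)

(* Defs.v *)
From Stdlib Require Import Reals.
Open Scope R_scope.

Definition inC (b : R * R) : Prop :=
  0 <= fst b <= 1 /\ 0 <= snd b <= 1 /\ fst b <= snd b.

(* A subset of R^2 is closed (standard topology of R^2): its complement is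
   open, using square neighbourhoods (which generate the Euclidean topology). *)
Definition closed2 (A : R * R -> Prop) : Prop :=
  forall p : R * R, ~ A p ->
    exists eps : R, 0 < eps /\
      forall q : R * R, Rabs (fst q - fst p) < eps -> Rabs (snd q - snd p) < eps -> ~ A q.

(* Main.v *)
Require Import Defs.
From Stdlib Require Import Reals Lra Classical.
Open Scope R_scope.

Theorem lemma1 (A : R * R -> Prop) :
  (forall b, A b -> inC b) ->
  closed2 A ->
  (forall b : R, 0 <= b <= 1 -> A (b, b)) ->
  (forall beta gamma : R * R, A beta -> inC gamma ->
     fst beta <= fst gamma -> fst gamma <= snd gamma -> snd gamma <= snd beta ->
     A gamma) ->
  exists Delta : R -> R,
    (forall x, 0 <= x <= 1 -> 0 <= Delta x <= 1) /\
    (forall beta : R * R, inC beta ->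
       (A beta <-> snd beta - fst beta <= Delta ((fst beta + snd beta) / 2))).
Proof.
  intros HC Hcl Hdiag Hmon.
  set (S := fun x d => d = 0 \/ (0 <= d /\ A (x - d/2, x + d/2))).
  assert (Hlub : forall x, {m | is_lub (S x) m}).
  { intro x. apply completeness.
    - exists 1. intros d [->|[Hd Ha]]; [lra|].
      destruct (HC _ Ha) as [H1 [H2 H3]]; simpl in *; lra.
    - exists 0. left; reflexivity. }
  exists (fun x => proj1_sig (Hlub x)).
  split.
  - intros x Hx. destruct (Hlub x) as [m [Hub Hl]]; simpl. split.
    + apply Hub. left; reflexivity.
    + apply Hl. intros d [->|[Hd Ha]]; [lra|].
      destruct (HC _ Ha) as [H1 [H2 H3]]; simpl in *; lra.
  - intros [b1 b2] Hb. destruct Hb as [H1 [H2 H3]]; simpl in *.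
    destruct (Hlub ((b1 + b2) / 2)) as [m [Hub Hl]]; simpl.
    split.
    + intro Ha. apply Hub. right. split; [lra|].
      replace ((b1 + b2) / 2 - (b2 - b1) / 2) with b1 by field.
      replace ((b1 + b2) / 2 + (b2 - b1) / 2) with b2 by field. exact Ha.
    + intro Hd. destruct (classic (A (b1, b2))) as [Ha|Hna]; [exact Ha|].
      exfalso.
      destruct (Hcl _ Hna) as [eps [Heps Hq]].
      assert (Hex : exists d'', S ((b1 + b2) / 2) d'' /\ m - eps < d'').
      { apply NNPP. intro Hn. assert (m <= m - eps); [|lra].
        apply Hl. intros d Hs. apply Rnot_lt_le. intro Hlt. apply Hn.
        exists d; split; assumption. }
      destruct Hex as [d'' [Hs Hlt]].
      assert (Hsm : d'' <= m) by (apply Hub; exact Hs).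
      set (d0 := Rmin d'' (b2 - b1)).
      assert (Hd0a : A ((b1 + b2) / 2 - d0 / 2, (b1 + b2) / 2 + d0 / 2)).
      { destruct Hs as [->|[Hd'' Ha'']].
        - assert (d0 = 0) by (unfold d0; apply Rmin_left; lra).
          rewrite H. replace (0/2) with 0 by field. rewrite Rminus_0_r, Rplus_0_r. apply Hdiag. lra.
        - apply (Hmon _ _ Ha'').
          + unfold inC; simpl. unfold d0.
            pose proof (Rmin_l d'' (b2 - b1)); pose proof (Rmin_r d'' (b2 - b1)).
            pose proof (Rmin_glb d'' (b2-b1) 0 ltac:(lra) ltac:(lra)).
            lra.
          + simpl; unfold d0; pose proof (Rmin_l d'' (b2 - b1)); lra.
          + simpl; unfold d0; pose proof (Rmin_glb d'' (b2-b1) 0 ltac:(lra) ltac:(lra)); lra.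
          + simpl; unfold d0; pose proof (Rmin_l d'' (b2 - b1)); lra. }
      assert (Hd0r : b2 - b1 - d0 < eps /\ 0 <= b2 - b1 - d0).
      { unfold d0. destruct (Rle_dec d'' (b2 - b1)) as [Hle|Hgt].
        - rewrite Rmin_left by lra. lra.
        - rewrite Rmin_right by lra. lra. }
      refine (Hq _ _ _ Hd0a); simpl; apply Rabs_def1; lra.
Qed.
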